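(* Let $f_0,\ldots,f_d\in\mathbb{C}[t_1^{\pm1},\ldots,t_d^{\pm1}]$ be any Laurent polynomials whose ideal of algebraic relations $I=\{g\in\mathbb{C}[x_0,\ldots,x_d]: g(f_0,\ldots,f_d)=0\}$ is principal, $I=\langle g\rangle$ with $g\neq0$. Let $A_i\subset\mathbb{Z}^d$ be the support of $f_i$ and $P_i=\mathrm{conv}(A_i)$ its Newton polytope. Let $Q\subset\mathbb{R}^{d+1}$ be the Newton polytope of the (unique up to scaling) irreducible generator of the prime ideal of algebraic relations among Laurent polynomials $h_0,\ldots,h_d$ with supports $A_0,\ldots,A_d$ whose coefficients are generic relative to these supports (this polytope depends only on $P_0,\ldots,P_d$). Then $Q$ contains a translate of the Newton polytope of $g$.
   Context: ''Generic relative to its support'' means the coefficient vector of $h_i$ lies in a suitable nonempty Zariski open subset of $\mathbb{C}^{A_i}$. The Newton polytope of a polynomial is the convex hull of the exponent vectors of its monomials with nonzero coefficients. *)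

(* Defs.v *)
From HB Require Import structures.
From mathcomp Require Import all_boot all_order all_algebra.
From mathcomp Require Import reals Rstruct.
From mathcomp Require Import complex.
From mathcomp Require Import mpoly.

Set Implicit Arguments.
Unset Strict Implicit.
Unset Printing Implicit Defensive.

Import Order.TTheory GRing.Theory Num.Theory.
Local Open Scope ring_scope.

Definition RR : rcfType := Rdefinitions.R.
Definition CC : numClosedFieldType := (complex RR).

(* Laurent polynomials in d variables, presented as the localization
   C[t_1..t_d][1/(t_1...t_d)]: the pair (p, e) denotes p / (t_1...t_d)^e. *)
Definition laurent (d : nat) := ({mpoly CC[d]} * nat)%type.

Definition tprod (d : nat) (e : nat) : {mpoly CC[d]} :=
  (\prod_(j < d) 'X_j) ^+ e.

Definition ladd d (f g : laurent d) : laurent d :=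
  (f.1 * tprod d g.2 + g.1 * tprod d f.2, (f.2 + g.2)%N).
Definition lmul d (f g : laurent d) : laurent d := (f.1 * g.1, (f.2 + g.2)%N).
Definition lexp d (f : laurent d) (k : nat) : laurent d := (f.1 ^+ k, (f.2 * k)%N).
Definition lconst d (c : CC) : laurent d := (c%:MP, 0%N).

Definition lzero d (f : laurent d) : Prop := f.1 = 0.

Definition lsubst d n (g : {mpoly CC[n]}) (f : 'I_n -> laurent d) : laurent d :=
  \big[@ladd d/lconst d 0]_(m <- msupp g)
     lmul (lconst d g@_m) (\big[@lmul d/lconst d 1]_(i < n) lexp (f i) (m i)).

Definition generates_relations d n (g : {mpoly CC[n]}) (f : 'I_n -> laurent d) :=
  forall h : {mpoly CC[n]}, lzero (lsubst h f) <-> exists q, h = q * g.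

Definition in_conv n (S : seq 'rV[RR]_n) (x : 'rV[RR]_n) : Prop :=
  exists w : 'I_(size S) -> RR,
    (forall j, 0 <= w j) /\ \sum_j w j = 1 /\
    x = \sum_j w j *: nth 0 S j.

Definition exponents n (g : {mpoly CC[n]}) : seq 'rV[RR]_n :=
  [seq \row_i ((m : 'X_{1..n}) i)%:R | m <- msupp g].

Definition newton n (g : {mpoly CC[n]}) : 'rV[RR]_n -> Prop :=
  in_conv (exponents g).

Definition zariski_open N (U : ('I_N -> CC) -> Prop) : Prop :=
  exists S : {mpoly CC[N]} -> Prop,
    forall c, U c <-> exists p, S p /\ p.@[c] != 0.

(* Coefficient space of Laurent polynomials h_0..h_d with the same supports as
   f_0..f_d: one coordinate for each (i, monomial of the numerator of f_i). *)
Definition coef_index d (f : 'I_d.+1 -> laurent d) : finType :=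
  {i : 'I_d.+1 & 'I_(size (msupp (f i).1))}.

Definition generic_family d (f : 'I_d.+1 -> laurent d)
    (c : 'I_#|coef_index f| -> CC) : 'I_d.+1 -> laurent d :=
  fun i =>
    (\sum_(j < size (msupp (f i).1))
        c (enum_rank (Tagged (fun i => 'I_(size (msupp (f i).1))) j : coef_index f))
          *: 'X_[nth 0%MM (msupp (f i).1) j],
     (f i).2).

(* Main.v *)
Require Import Defs.
From HB Require Import structures.
From mathcomp Require Import all_boot all_order all_algebra.
From mathcomp Require Import reals Rstruct complex mpoly.
From mathcomp Require Import ring lra zify.
From Stdlib Require Import Classical ClassicalEpsilon FunctionalExtensionality.
Set Implicit Arguments.
Unset Strict Implicit.
Unset Printing Implicit Defensive.
Import Order.TTheory GRing.Theory Num.Theory.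
Local Open Scope ring_scope.

Section Conv.
Variables (R : realFieldType) (n : nat).
Local Notation V := 'rV[R]_n.

Definition conv (P : V -> Prop) (x : V) : Prop :=
  exists s : seq (R * V),
    (forall p, p \in s -> 0 <= p.1 /\ P p.2) /\
    \sum_(p <- s) p.1 = 1 /\ x = \sum_(p <- s) p.1 *: p.2.

Lemma conv_pt (P : V -> Prop) x : P x -> conv P x.
Proof.
move=> Px; exists [:: (1, x)]; split; last by rewrite !big_seq1 scale1r.
by move=> p; rewrite inE => /eqP -> /=; split.
Qed.

Lemma conv_mono (P P' : V -> Prop) x :
  (forall y, P y -> P' y) -> conv P x -> conv P' x.
Proof.
move=> PP' [s [Hs [H1 H2]]]; exists s; split => // p /Hs [? ?]; split => //.
exact: PP'.
Qed.

Lemma conv_flat_gen (P : V -> Prop) (s : seq (R * V)) :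
  (forall p, p \in s -> 0 <= p.1 /\ conv P p.2) ->
  exists s' : seq (R * V),
    (forall p, p \in s' -> 0 <= p.1 /\ P p.2) /\
    \sum_(p <- s') p.1 = \sum_(p <- s) p.1 /\
    \sum_(p <- s') p.1 *: p.2 = \sum_(p <- s) p.1 *: p.2.
Proof.
elim: s => [|[w y] s IH] Hs.
  by exists [::]; split => //; split.
have [s' [Hs' [E1 E2]]] : exists s' : seq (R * V),
    (forall p, p \in s' -> 0 <= p.1 /\ P p.2) /\
    \sum_(p <- s') p.1 = \sum_(p <- s) p.1 /\
    \sum_(p <- s') p.1 *: p.2 = \sum_(p <- s) p.1 *: p.2.
  by apply: IH => p ps; apply: Hs; rewrite inE ps orbT.
have [w0 [t [Ht [T1 T2]]]] : 0 <= w /\ conv P y.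
  by have := Hs (w, y); rewrite inE eqxx => /(_ isT).
exists ([seq (w * p.1, p.2) | p <- t] ++ s'); split.
  move=> p; rewrite mem_cat => /orP [/mapP [p' p't ->]|ps']; last exact: Hs'.
  by have [? ?] := Ht _ p't; split => //=; rewrite mulr_ge0.
split.
  by rewrite big_cat big_map /= -mulr_sumr T1 mulr1 E1 big_cons.
rewrite big_cat big_map /= big_cons E2 T2 scaler_sumr; congr (_ + _).
by apply: eq_bigr => p _; rewrite scalerA.
Qed.

Lemma conv_trans (P P' : V -> Prop) x :
  (forall y, P y -> conv P' y) -> conv P x -> conv P' x.
Proof.
move=> PP' [s [Hs [H1 H2]]].
have [s' [Hs' [E1 E2]]] := @conv_flat_gen P' s
   (fun p ps => let: conj a b := Hs p ps in conj a (PP' _ b)).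
by exists s'; split => //; split; [rewrite E1 | rewrite E2].
Qed.

Lemma conv_comb2 (P : V -> Prop) a y z :
  0 <= a -> a <= 1 -> conv P y -> conv P z -> conv P (a *: y + (1 - a) *: z).
Proof.
move=> a0 a1 Py Pz; apply: (@conv_trans (conv P)) => //.
exists [:: (a, y); (1 - a, z)]; split.
  move=> p; rewrite !inE => /orP [] /eqP -> /=; split => //.
  by rewrite subr_ge0.
by rewrite !big_cons !big_nil /= !addr0; split => //; rewrite addrC subrK.
Qed.


Lemma conv_decomp (P : V -> Prop) t x :
  conv (fun y => P y \/ y = t) x ->
  x = t \/ exists b u, 0 <= b /\ b < 1 /\ conv P u /\ x = b *: t + (1 - b) *: u.
Proof.
move=> [s [Hs [H1 H2]]].
pose b := \sum_(p <- s | p.2 == t) p.1.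
pose r := \sum_(p <- s | p.2 != t) p.1.
have E1 : b + r = 1 by rewrite -H1 (bigID (fun p : R * V => p.2 == t)).
have b0 : 0 <= b by rewrite /b big_seq_cond; apply: sumr_ge0 => p /andP [ps _]; have [] := Hs p ps.
have r0 : 0 <= r by rewrite /r big_seq_cond; apply: sumr_ge0 => p /andP [ps _]; have [] := Hs p ps.
have E2 : x = b *: t + \sum_(p <- s | p.2 != t) p.1 *: p.2.
  rewrite H2 (bigID (fun p => p.2 == t)) /= /b scaler_suml; congr (_ + _).
  by apply: eq_bigr => p /eqP ->.
have [r_eq0|r_neq0] := eqVneq r 0.
  left; rewrite E2.
  have b1 : b = 1 by rewrite -E1 r_eq0 addr0.
  rewrite b1 scale1r big_seq_cond big1 ?addr0 // => p /andP [ps pt].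
  have /eqP := r_eq0; rewrite /r big_seq_cond psumr_eq0.
    by move=> /allP /(_ p ps); rewrite ps pt /= => /eqP ->; rewrite scale0r.
  by move=> i /andP [iS _]; have [] := Hs i iS.
right; exists b, (r^-1 *: \sum_(p <- s | p.2 != t) p.1 *: p.2).
have rpos : 0 < r by rewrite lt_def r_neq0 r0.
have -> : 1 - b = r by rewrite -E1 addrC addKr.
split => //; split; first by rewrite -E1 ltrDl.
split; last by rewrite scalerA mulfV // scale1r.
exists [seq (r^-1 * p.1, p.2) | p <- s & p.2 != t]; split.
  move=> p /mapP [p' ]; rewrite mem_filter => /andP [p't p's] -> /=.
  have [w0 [Pp|pt]] := Hs _ p's; last by rewrite pt eqxx in p't.
  by split => //; rewrite mulr_ge0 // invr_ge0.
rewrite !big_map !big_filter; split.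
  by rewrite -mulr_sumr -/r mulVf.
by rewrite scaler_sumr; apply: eq_bigr => p _; rewrite scalerA.
Qed.

Lemma conv_elim (P : V -> Prop) t x :
  x <> t -> conv (fun y => P y \/ y = t) x -> conv (fun y => P y \/ y = x) t ->
  conv P x.
Proof.
move=> xt /conv_decomp [//|[b [u [b0 [b1 [Pu Ex]]]]]].
move=> /conv_decomp [tx|[a [v [a0 [a1 [Pv Et]]]]]]; first by case: xt.
have ab1 : a * b < 1.
  by apply: (le_lt_trans _ a1); rewrite ler_piMr // ltW.
have g0 : 0 < 1 - a * b by rewrite subr_gt0.
pose c := b * (1 - a) / (1 - a * b).
have -> : x = c *: v + (1 - c) *: u.
  apply/rowP => i; have := congr1 (fun y : V => y 0 i) Ex.
  have := congr1 (fun y : V => y 0 i) Et; rewrite !mxE => E1 E2.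
  rewrite /c; rewrite E1 in E2.
  move: E2; set X := x 0 i; set T := v 0 i; set U := u 0 i => E.
  have gn : 1 - a * b != 0 by rewrite lt0r_neq0.
  apply: (mulfI gn); transitivity (b * (1 - a) * T + (1 - b) * U).
    have -> : (1 - a * b) * X = X - a * b * X by ring.
    rewrite {1}E; ring.
  by field.
apply: conv_comb2 => //.
- apply: divr_ge0; last exact: ltW.
  by apply: mulr_ge0 => //; rewrite subr_ge0 ltW.
- rewrite /c ler_pdivrMr // mul1r.
  have : b <= 1 by exact: ltW.
  nra.
Qed.


Definition ext (S : seq V) (y : V) :=
  y \in S /\ ~ conv (fun z => z \in S /\ z <> y) y.

Lemma conv_ext_gen k (S : seq V) : (size S <= k)%N ->
  forall x, x \in S -> conv (ext S) x.
Proof.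
elim: k S => [|k IH] S hS x xS.
  by case: S hS xS.
case: (classic (exists t, t \in S /\ conv (fun z => z \in S /\ z <> t) t)).
  move=> [t [tS tc]].
  pose S' := filter (predC1 t) S.
  have hS' : (size S' <= k)%N.
    have : (0 < count (predC (predC1 t)) S)%N.
      by rewrite -has_count; apply/hasP; exists t => //=; rewrite eqxx.
    move: hS; rewrite /S' size_filter -(count_predC (predC1 t) S); lia.
  have extS' : forall y, ext S' y -> ext S y.
    move=> y [yS' ny].
    have [yt yS] : y != t /\ y \in S by move: yS'; rewrite mem_filter => /andP.
    split => // cy; apply: ny.
    apply: (@conv_elim (fun z => z \in S' /\ z <> y) t y).
    - by move=> e; rewrite e eqxx in yt.
    - apply: conv_mono cy => z [zS zy].
      case: (eqVneq z t) => [->|zt]; first by right.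
      by left; split => //; rewrite mem_filter /= zt.
    - apply: conv_mono tc => z [zS zt].
      case: (eqVneq z y) => [->|zy]; first by right.
      left; split; last exact/eqP.
      by rewrite mem_filter zS andbT; apply/eqP.
  case: (eqVneq x t) => [->|xt].
    apply: conv_trans tc => z [zS zt].
    apply: conv_mono (IH S' hS' z _); first exact: extS'.
    by rewrite mem_filter zS andbT; apply/eqP.
  apply: conv_mono (IH S' hS' x _); first exact: extS'.
  by rewrite mem_filter /= xt xS.
by move=> H; apply: conv_pt; split => // cx; apply: H; exists x; split.
Qed.

Lemma conv_ext (S : seq V) x : x \in S -> conv (ext S) x.
Proof. exact: (@conv_ext_gen (size S)). Qed.

Lemma mid_not_ext (S : seq V) y z : y \in S -> z \in S -> y != z ->
  ~ ext S (2^-1 *: (y + z)).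
Proof.
move=> yS zS yz [_ H]; apply: H.
have ym : y <> 2^-1 *: (y + z).
  move=> /rowP E; move/eqP: yz; apply; apply/rowP => i.
  by move: (E i); rewrite !mxE; lra.
have zm : z <> 2^-1 *: (y + z).
  move=> /rowP E; move/eqP: yz; apply; apply/rowP => i.
  by move: (E i); rewrite !mxE; lra.
exists [:: (2^-1, y); (2^-1, z)]; split.
  move=> p; rewrite !inE => /orP [] /eqP -> /=; (split; [by rewrite invr_ge0 | by split]).
rewrite !big_cons !big_nil !addr0 /=; split; first lra.
by rewrite scalerDr.
Qed.

End Conv.
Lemma in_conv_conv n (S : seq 'rV[RR]_n) x :
  in_conv S x -> conv (fun y => y \in S) x.
Proof.
move=> [w [w0 [w1 wx]]].
exists [seq (w j, nth 0 S j) | j <- index_enum 'I_(size S)]; split.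
  by move=> p /mapP [j _ ->] /=; split => //; exact: mem_nth.
by rewrite !big_map.
Qed.

Lemma sum_index_part n (M : zmodType) (S : seq 'rV[RR]_n) (s : seq (RR * 'rV[RR]_n))
  (F : RR * 'rV[RR]_n -> M) :
  (forall p, p \in s -> p.2 \in S) ->
  \sum_(j < size S) \sum_(p <- s | index p.2 S == j) F p = \sum_(p <- s) F p.
Proof.
move=> Hs.
under eq_bigr do rewrite big_mkcond /=.
rewrite exchange_big /= big_seq [RHS]big_seq; apply: eq_bigr => p ps.
rewrite -big_mkcond /=.
have lt : (index p.2 S < size S)%N by rewrite index_mem Hs.
by rewrite (big_pred1 (Ordinal lt)).
Qed.

Lemma conv_in_conv n (S : seq 'rV[RR]_n) x :
  conv (fun y => y \in S) x -> in_conv S x.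
Proof.
move=> [s [Hs [H1 H2]]].
exists (fun j : 'I_(size S) => \sum_(p <- s | index p.2 S == j) p.1); split.
  move=> j; rewrite big_seq_cond; apply: sumr_ge0 => p /andP [ps _].
  by have [] := Hs p ps.
have Hs2 : forall p, p \in s -> p.2 \in S by move=> p /Hs [].
split; first by rewrite sum_index_part.
rewrite H2 -(sum_index_part _ Hs2); apply: eq_bigr => j _.
rewrite scaler_suml big_seq_cond [RHS]big_seq_cond; apply: eq_bigr => p /andP [ps /eqP <-].
by rewrite nth_index // Hs2.
Qed.

Section Newton.
Variable n : nat.
Implicit Types g q : {mpoly CC[n]}.

Definition expo (m : 'X_{1..n}) : 'rV[RR]_n := \row_i ((m i)%:R : RR).

Lemma expoD m1 m2 : expo (m1 + m2)%MM = expo m1 + expo m2.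
Proof. by apply/rowP => i; rewrite !mxE mnmDE natrD. Qed.

Lemma expo_inj : injective expo.
Proof.
move=> m1 m2 /rowP E; apply/mnmP => i; move: (E i); rewrite !mxE.
by move/eqP; rewrite eqr_nat => /eqP.
Qed.

Lemma exponentsE g : exponents g = [seq expo m | m <- msupp g].
Proof. by []. Qed.

Lemma coefM g q m : (g * q)@_m =
  \sum_(a <- msupp g) \sum_(b <- msupp q) g@_a * q@_b * ((a + b)%MM == m)%:R.
Proof.
rewrite {1}(mpolyE g) {1}(mpolyE q) mulr_suml raddf_sum /=.
apply: eq_bigr => a _; rewrite mulr_sumr raddf_sum /=; apply: eq_bigr => b _.
by rewrite -scalerAl -scalerAr scalerA -mpolyXD mcoeffZ mcoeffX.
Qed.

Definition SS g q := [seq expo a + expo b | a <- msupp g, b <- msupp q].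

Lemma ext_coef g q x : ext (SS g q) x ->
  exists m, m \in msupp (g * q) /\ x = expo m.
Proof.
move=> xe; have [xS _] := xe.
have [[a b] /= /andP [ag bq] xab] : exists2 p, (p.1 \in msupp g) && (p.2 \in msupp q) & x = expo p.1 + expo p.2.
  by case/allpairsP: xS => p [? ? ?]; exists p => //; apply/andP.
exists (a + b)%MM; split; last by rewrite expoD.
have Z : forall a' b', a' \in msupp g -> b' \in msupp q -> (a' != a) || (b' != b) ->
    ((a' + b')%MM == (a + b)%MM) = false.
  move=> a' b' a'g b'q neq; apply/negP => /eqP E.
  have E' : expo a' + expo b' = expo a + expo b by rewrite -!expoD E.
  have [aa|na] := eqVneq a' a.
    move: neq; rewrite aa eqxx /= => /negP; apply; apply/eqP.
    by move: E; rewrite aa => /addmI.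
  have xm : x = 2^-1 *: ((expo a' + expo b) + (expo a + expo b')).
    rewrite xab; apply/rowP => i; move/rowP: E' => /(_ i); rewrite !mxE; lra.
  apply: (@mid_not_ext _ _ (SS g q) (expo a' + expo b) (expo a + expo b')); last by rewrite -xm.
  - by apply/allpairsP; exists (a', b).
  - by apply/allpairsP; exists (a, b').
  - apply/negP => /eqP /rowP Eyz; move/negP: na; apply; apply/eqP.
    apply: expo_inj; apply/rowP => i; move: (Eyz i); move/rowP: E' => /(_ i).
    rewrite !mxE; lra.
rewrite mcoeff_msupp coefM (bigD1_seq a) ?msupp_uniq //=.
rewrite [X in _ + X]big1_seq ?addr0; last first.
  move=> a' /andP [na a'g]; rewrite big1_seq // => b' /andP [_ b'q].
  by rewrite Z ?mulr0 // na.
rewrite (bigD1_seq b) ?msupp_uniq //= [X in _ + X]big1_seq ?addr0; last first.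
  by move=> b' /andP [nb b'q]; rewrite Z ?mulr0 // nb orbT.
by rewrite eqxx mulr1 mulf_neq0 // -mcoeff_msupp.
Qed.

Lemma newton_prod g q b0 x : b0 \in msupp q -> newton g x ->
  conv (fun y => y \in exponents (g * q)) (x + expo b0).
Proof.
rewrite /newton => b0q /in_conv_conv [s [Hs [H1 H2]]].
apply: (@conv_trans _ _ (fun y => y \in SS g q)).
  move=> y yS; apply: conv_mono (conv_ext yS) => z ze.
  have [m [mgq ->]] := ext_coef ze.
  by rewrite exponentsE map_f.
exists [seq (p.1, p.2 + expo b0) | p <- s]; split.
  move=> p /mapP [p' p's ->] /=; have [w0 p'g] := Hs p' p's; split => //.
  move: p'g; rewrite exponentsE => /mapP [a ag ->].
  by apply/allpairsP; exists (a, b0).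
rewrite !big_map /=; split => //.
rewrite H2 [RHS](eq_bigr (fun p => p.1 *: p.2 + p.1 *: expo b0)); last first.
  by move=> p _; rewrite scalerDr.
by rewrite big_split /= -scaler_suml H1 scale1r.
Qed.

End Newton.

Section Laurent.
Variable d : nat.

Lemma tprodD a b : tprod d (a + b) = tprod d a * tprod d b.
Proof. by rewrite /tprod exprD. Qed.

Lemma tprod_neq0 k : tprod d k != 0.
Proof.
rewrite /tprod expf_neq0 // prodf_seq_neq0; apply/allP => j _ /=.
by apply/eqP => /(congr1 (mcoeff U_(j)%MM)); rewrite mcoeffX eqxx mcoeff0 => /eqP; rewrite oner_eq0.
Qed.

Lemma ladd_fold (N : nat) (L : seq 'X_{1..N}) (G : 'X_{1..N} -> laurent d) K :
  (forall i, i \in L -> ((G i).2 <= K)%N) ->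
  (\big[@ladd d/lconst d 0]_(i <- L) G i).1 * tprod d K =
  tprod d (\big[@ladd d/lconst d 0]_(i <- L) G i).2 *
    \sum_(i <- L) (G i).1 * tprod d (K - (G i).2).
Proof.
elim: L => [|a L IH] HL.
  by rewrite !big_nil /= mpolyC0 !mul0r mulr0.
rewrite !big_cons /=.
set X := \big[@ladd d/lconst d 0]_(i <- L) G i.
have IH' := IH (fun i iL => HL i (@mem_behead _ (a :: L) i iL)).
have Ha : ((G a).2 <= K)%N by apply: HL; rewrite inE eqxx.
have TK : tprod d K = tprod d (G a).2 * tprod d (K - (G a).2).
  by rewrite -tprodD subnKC.
rewrite /ladd /= -/X.
transitivity ((G a).1 * tprod d X.2 * tprod d K + tprod d (G a).2 * (X.1 * tprod d K)); first by ring.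
rewrite IH' TK tprodD; ring.
Qed.

Variable n : nat.
Implicit Types (f : 'I_n -> laurent d) (h : {mpoly CC[n]}).

Definition Dm f (m : 'X_{1..n}) := (\sum_(i < n) (f i).2 * m i)%N.
Definition psi f K (m : 'X_{1..n}) : {mpoly CC[d]} :=
  \prod_(i < n) (f i).1 ^+ m i * tprod d (K - Dm f m).

Lemma lsubst_zero_iff f h K : (forall m, m \in msupp h -> (Dm f m <= K)%N) ->
  lzero (lsubst h f) <-> \sum_(m <- msupp h) h@_m *: psi f K m = 0.
Proof.
move=> HK.
pose G (m : 'X_{1..n}) :=
  lmul (lconst d h@_m) (\big[@lmul d/lconst d 1]_(i < n) lexp (f i) (m i)).
have G1 : forall m, (G m).1 = (h@_m)%:MP * \prod_(i < n) (f i).1 ^+ m i.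
  move=> m; rewrite /G /=; congr (_ * _).
  rewrite (big_morph (fun x : laurent d => x.1) (id1 := 1) (op1 := *%R)) //.
have G2 : forall m, (G m).2 = Dm f m.
  move=> m; rewrite /G /= add0n.
  by rewrite (big_morph (fun x : laurent d => x.2) (id1 := 0%N) (op1 := addn)).
have E := @ladd_fold n (msupp h) G K.
rewrite /lzero /lsubst -/G.
have -> : \sum_(m <- msupp h) h@_m *: psi f K m =
          \sum_(m <- msupp h) (G m).1 * tprod d (K - (G m).2).
  apply: eq_bigr => m _; rewrite G1 G2 /psi -mul_mpolyC mulrA.
  by [].
move: E; set X := \big[@ladd d/lconst d 0]_(i <- msupp h) G i => E.
have E' := E (fun m mh => eq_ind_r (fun k => (k <= K)%N) (HK m mh) (G2 m)).
split => [X0|S0].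
  by move: E'; rewrite X0 mul0r => /esym /eqP; rewrite mulf_eq0 (negPf (tprod_neq0 _)) /= => /eqP.
by move: E'; rewrite S0 mulr0 => /eqP; rewrite mulf_eq0 (negPf (tprod_neq0 _)) orbF => /eqP.
Qed.

End Laurent.

Definition pb (P : Prop) : bool :=
  if excluded_middle_informative P then true else false.
Lemma pbP (P : Prop) : reflect P (pb P).
Proof. by rewrite /pb; case: excluded_middle_informative => H; constructor. Qed.

Lemma poly_all_roots (p : {poly CC}) : (forall s, p.[s] = 0) -> p = 0.
Proof.
move=> H; apply/eqP/negP => /negP pn0.
have Hall : all (root p) [seq i%:R | i <- iota 0 (size p)].
  by apply/allP => x _; apply/rootP.
have Hu : uniq [seq (i%:R : CC) | i <- iota 0 (size p)].
  rewrite map_inj_uniq ?iota_uniq //.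
  by move=> a b /eqP; rewrite eqr_nat => /eqP.
by have := max_poly_roots pn0 Hall Hu; rewrite size_map size_iota ltnn.
Qed.

Lemma kernel_specialize r k (A : 'M[{poly CC}]_(r, k)) (q : {poly CC}) t :
  q != 0 ->
  (forall s, q.[s] != 0 -> exists v : 'cV_k, v != 0 /\ map_mx (horner_eval s) A *m v = 0) ->
  exists v : 'cV_k, v != 0 /\ map_mx (horner_eval t) A *m v = 0.
Proof.
move=> qn0 Hs.
case: (classic (exists v : 'cV_k, v != 0 /\ map_mx (horner_eval t) A *m v = 0)) => // Hn.
exfalso.
set A0 := map_mx (horner_eval t) A.
have H0 : forall v : 'cV_k, A0 *m v = 0 -> v = 0.
  by move=> v Av; apply/eqP/negP => /negP vn0; apply: Hn; exists v; split.
have rf : row_full A0.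
  have : row_free A0^T.
    apply: inj_row_free => w Hw.
    have : A0 *m w^T = 0 by rewrite -[A0]trmxK -trmx_mul Hw trmx0.
    by move/H0 => /(congr1 trmx); rewrite trmxK trmx0.
  by rewrite /row_free /row_full mxrank_tr.
pose F := fullrankfun rf.
have uF := fullrowsub_unit rf.
pose Pd := \det (rowsub F A).
have PdE : forall s, Pd.[s] = \det (rowsub F (map_mx (horner_eval s) A)).
  by move=> s; rewrite -map_mxsub det_map_mx.
have Pd0 : Pd != 0.
  apply/negP => /eqP P0; move: uF; rewrite unitmxE unitfE -/A0 -PdE P0 horner0.
  by rewrite eqxx.
suff : Pd * q = 0 by move/eqP; rewrite mulf_eq0 (negPf Pd0) (negPf qn0).
apply: poly_all_roots => s; rewrite hornerM.
have [qs0|qsn0] := eqVneq q.[s] 0; first by rewrite qs0 mulr0.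
have [v [vn0 Av]] := Hs s qsn0.
rewrite PdE; apply/eqP; rewrite mulf_eq0; apply/orP; left; apply/negPn/negP => dn0.
have un : rowsub F (map_mx (horner_eval s) A) \in unitmx by rewrite unitmxE unitfE.
have : rowsub F (map_mx (horner_eval s) A) *m v = 0.
  have -> : rowsub F (map_mx (horner_eval s) A) *m v =
            rowsub F (map_mx (horner_eval s) A *m v).
    by apply/matrixP => i j; rewrite !mxE; apply: eq_bigr => l _; rewrite !mxE.
  by rewrite Av; apply/matrixP => i j; rewrite !mxE.
move/(congr1 (mulmx (invmx (rowsub F (map_mx (horner_eval s) A))))).
by rewrite mulKmx // mulmx0 => vz; rewrite vz eqxx in vn0.
Qed.

Section Main.
Variables (d : nat) (f : 'I_d.+1 -> laurent d).
Local Notation N := d.+1.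
Local Notation I := #|coef_index f|.

Definition cf : 'I_I -> CC := fun k =>
  let t := enum_val k in (f (tag t)).1@_(nth 0%MM (msupp (f (tag t)).1) (tagged t)).

Lemma GF_cf : generic_family cf = f.
Proof.
apply: functional_extensionality => i.
rewrite /generic_family [RHS](surjective_pairing (f i)); congr pair.
rewrite [RHS]mpolyE (big_nth 0%MM) big_mkord; apply: eq_bigr => j _.
by rewrite /cf enum_rankK.
Qed.

Variable c0 : 'I_I -> CC.
Definition cpoly k : {poly CC} := (cf k)%:P + 'X * (c0 k - cf k)%:P.
Definition cs (s : CC) k := (cpoly k).[s].

Lemma cs0 : cs 0 = cf.
Proof.
by apply: functional_extensionality => k; rewrite /cs /cpoly hornerD hornerC mulrC hornerMX hornerC mulr0 addr0.
Qed.

Lemma cs1 : cs 1 = c0.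
Proof.
apply: functional_extensionality => k.
by rewrite /cs /cpoly hornerD hornerC mulrC hornerMX hornerC mulr1 addrC subrK.
Qed.

Definition psym i : {mpoly {poly CC}[d]} :=
  \sum_(j < size (msupp (f i).1))
    cpoly (enum_rank (Tagged (fun i => 'I_(size (msupp (f i).1))) j : coef_index f))
      *: 'X_[nth 0%MM (msupp (f i).1) j].

Variable K : nat.
Definition psisym (m : 'X_{1..N}) : {mpoly {poly CC}[d]} :=
  \prod_(i < N) psym i ^+ m i * (\prod_(j < d) 'X_j) ^+ (K - Dm f m).

Lemma psisym_map s m :
  map_mpoly (horner_eval s) (psisym m) = psi (generic_family (cs s)) K m.
Proof.
rewrite /psisym /psi /tprod rmorphM rmorph_prod rmorphXn rmorph_prod /=.
congr (_ * _ ^+ _); last by apply: eq_bigr => j _; rewrite map_mpolyX.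
apply: eq_bigr => i _; rewrite rmorphXn; congr (_ ^+ _).
rewrite /psym rmorph_sum /=; apply: eq_bigr => j _.
by rewrite map_mpolyZ map_mpolyX.
Qed.

Variable Cols : seq 'X_{1..N}.
Hypothesis Cols_uniq : uniq Cols.
Hypothesis HK : forall m, m \in Cols -> (Dm f m <= K)%N.

Definition Rw := flatten [seq msupp (psisym m) | m <- Cols].
Definition Mp : 'M[{poly CC}]_(size Rw, size Cols) :=
  \matrix_(i, j) (psisym (nth 0%MM Cols j))@_(nth 0%MM Rw i).
Definition vec (h : {mpoly CC[N]}) : 'cV[CC]_(size Cols) :=
  \col_j h@_(nth 0%MM Cols j).

Lemma phi_iff s (v : 'cV[CC]_(size Cols)) :
  (\sum_(j < size Cols) v j 0 *: psi (generic_family (cs s)) K (nth 0%MM Cols j) = 0)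
  <-> map_mx (horner_eval s) Mp *m v = 0.
Proof.
split => H.
  apply/matrixP => i z; rewrite (ord1 z) !mxE.
  move/(congr1 (mcoeff (nth 0%MM Rw i))): H; rewrite raddf_sum mcoeff0 => E.
  apply: (etrans _ E).
  apply: eq_bigr => j _; rewrite !mxE /= mcoeffZ -psisym_map mcoeff_map_mpoly.
  by rewrite mulrC.
apply/mpolyP => mu; rewrite mcoeff0 raddf_sum /=.
case: (boolP (mu \in Rw)) => muR.
  have lt : (index mu Rw < size Rw)%N by rewrite index_mem.
  have := congr1 (fun M : 'cV_(size Rw) => M (Ordinal lt) 0) H.
  rewrite !mxE /= => E; apply: (etrans _ E); apply: eq_bigr => j _.
  by rewrite !mxE nth_index // mcoeffZ -psisym_map mcoeff_map_mpoly mulrC.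
rewrite big1 // => j _.
rewrite mcoeffZ -psisym_map mcoeff_map_mpoly memN_msupp_eq0.
  by rewrite raddf0 mulr0.
apply: contra muR => mus; apply/flattenP; exists (msupp (psisym (nth 0%MM Cols j))) => //.
by apply: map_f; apply: mem_nth.
Qed.

Lemma sum_reindex (h : {mpoly CC[N]}) (F : 'X_{1..N} -> {mpoly CC[d]}) :
  {subset msupp h <= Cols} ->
  \sum_(m <- msupp h) h@_m *: F m =
  \sum_(j < size Cols) vec h j 0 *: F (nth 0%MM Cols j).
Proof.
move=> sub.
transitivity (\sum_(m <- Cols) h@_m *: F m); last first.
  by rewrite (big_nth 0%MM) big_mkord; apply: eq_bigr => j _; rewrite !mxE.
rewrite [RHS](bigID (fun m => m \in msupp h)) /= [X in _ + X]big1 ?addr0; last first.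
  by move=> m /memN_msupp_eq0 ->; rewrite scale0r.
rewrite -[RHS]big_filter; apply: perm_big; apply: uniq_perm.
- exact: msupp_uniq.
- by rewrite filter_uniq.
by move=> m; rewrite mem_filter; case: (boolP (m \in msupp h)) => // /sub ->.
Qed.

Lemma key_iff s h : {subset msupp h <= Cols} ->
  lzero (lsubst h (generic_family (cs s))) <-> map_mx (horner_eval s) Mp *m vec h = 0.
Proof.
move=> sub; rewrite (@lsubst_zero_iff d N (generic_family (cs s)) h K).
  by rewrite sum_reindex // phi_iff.
by move=> m /sub /HK.
Qed.

Definition polyOf (v : 'cV[CC]_(size Cols)) : {mpoly CC[N]} :=
  \sum_(j < size Cols) v j 0 *: 'X_[nth 0%MM Cols j].

Lemma polyOf_coef v (j : 'I_(size Cols)) : (polyOf v)@_(nth 0%MM Cols j) = v j 0.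
Proof.
rewrite /polyOf raddf_sum (bigD1 j) //= big1 ?addr0.
  by rewrite mcoeffZ mcoeffX eqxx mulr1.
move=> j' nj; rewrite mcoeffZ mcoeffX nth_uniq //.
have -> : (j' == j :> nat) = false.
  by apply/negbTE; apply: contra nj => /eqP E; apply/eqP/val_inj.
by rewrite mulr0.
Qed.

Lemma polyOf_supp v : {subset msupp (polyOf v) <= Cols}.
Proof.
move=> m; apply: contraLR => mC; rewrite mcoeff_msupp negbK.
rewrite /polyOf raddf_sum big1 // => j _; rewrite /= mcoeffZ mcoeffX.
case: eqP => [E|]; last by rewrite mulr0.
by rewrite -E mem_nth in mC.
Qed.

Lemma vec_polyOf v : vec (polyOf v) = v.
Proof. by apply/matrixP => j z; rewrite (ord1 z) mxE polyOf_coef. Qed.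

Lemma polyOf_neq0 v : v != 0 -> polyOf v != 0.
Proof.
move=> vn0; apply: contra vn0 => /eqP P0; apply/eqP/matrixP => j z.
by rewrite (ord1 z) -polyOf_coef P0 mcoeff0 mxE.
Qed.

Lemma vec_neq0 h : h != 0 -> {subset msupp h <= Cols} -> vec h != 0.
Proof.
move=> hn0 sub.
have [m mh] : exists m, m \in msupp h.
  by case E: (msupp h) => [|m l]; [move/eqP: E; rewrite msupp_eq0 (negPf hn0) | exists m; rewrite inE eqxx].
have mC := sub m mh.
have lt : (index m Cols < size Cols)%N by rewrite index_mem.
apply/negP => /eqP /matrixP /(_ (Ordinal lt) 0).
by rewrite !mxE /= nth_index //; apply/eqP; rewrite -mcoeff_msupp.
Qed.

End Main.

Lemma expo_sum n (m : 'X_{1..n}) : \sum_i (expo m) 0 i = (mdeg m)%:R.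
Proof. by rewrite mdegE natr_sum; apply: eq_bigr => i _; rewrite mxE. Qed.

Lemma conv_deg n (G0 : {mpoly CC[n]}) x : newton G0 x ->
  \sum_i x 0 i <= ((\max_(m <- msupp G0) mdeg m)%N)%:R.
Proof.
rewrite /newton => /in_conv_conv [s [Hs [H1 H2]]].
set B := (\max_(m <- msupp G0) mdeg m)%N.
rewrite H2; under eq_bigr do rewrite summxE.
rewrite exchange_big /=.
have -> : \sum_(p <- s) \sum_i (p.1 *: p.2) 0 i = \sum_(p <- s) p.1 * \sum_i p.2 0 i.
  by apply: eq_bigr => p _; rewrite mulr_sumr; apply: eq_bigr => i _; rewrite mxE.
have -> : (B%:R : RR) = \sum_(p <- s) p.1 * B%:R by rewrite -mulr_suml H1 mul1r.
rewrite big_seq [X in _ <= X]big_seq.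
apply: ler_sum => p ps; have [p0 pG] := Hs p ps.
apply: ler_wpM2l => //.
move: pG; rewrite exponentsE => /mapP [m mG ->].
by rewrite expo_sum ler_nat; apply: leq_bigmax_seq.
Qed.

Theorem proposition5p3 (d : nat) (f : 'I_d.+1 -> laurent d) (g : {mpoly CC[d.+1]})
  (Q : 'rV[RR]_d.+1 -> Prop) :
  g != 0 ->
  generates_relations g f ->
  (exists U : ('I_#|coef_index f| -> CC) -> Prop,
     zariski_open U /\ (exists c, U c) /\
     forall c, U c ->
       exists G : {mpoly CC[d.+1]},
         G != 0 /\ generates_relations G (generic_family c) /\
         (forall x, newton G x <-> Q x)) ->
  exists v : 'rV[RR]_d.+1, forall x, newton g x -> Q (x + v).
Proof.
move=> g0 Hg [U [[Sset HU] [[c0 Uc0] HG]]].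
have [p0 [Sp0 p0c0]] := (HU c0).1 Uc0.
have [G0 [G00 [HG0 NG0]]] := HG c0 Uc0.
pose B := (\max_(m <- msupp G0) mdeg m)%N.
have Qdeg : forall m : 'X_{1..d.+1}, Q (expo m) -> (mdeg m <= B)%N.
  move=> m /NG0 /conv_deg; rewrite expo_sum ler_nat //.
pose Cols := [seq m <- map val (index_enum (bmultinom d.+1 B.+1)) | pb (Q (expo m))].
have Cols_uniq : uniq Cols.
  by rewrite filter_uniq // map_inj_uniq ?index_enum_uniq //; apply: val_inj.
have memCols : forall m, m \in Cols <-> Q (expo m).
  move=> m; rewrite mem_filter; split; first by case/andP => /pbP.
  move=> Qm; rewrite (introT (pbP _) Qm) /=.
  have lt : (mdeg m < B.+1)%N by rewrite ltnS Qdeg.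
  by apply/mapP; exists (BMultinom lt); rewrite ?mem_index_enum.
pose K := (\sum_(m <- Cols) Dm f m)%N.
have HK : forall m, m \in Cols -> (Dm f m <= K)%N.
  by move=> m mC; rewrite /K (big_rem m) //= leq_addr.
pose qp := \sum_(m <- msupp p0) (p0@_m)%:P *
             \prod_(i < #|coef_index f|) cpoly c0 i ^+ m i.
have qpE : forall s, qp.[s] = p0.@[cs c0 s].
  move=> s; rewrite mevalE horner_sum; apply: eq_bigr => m _.
  rewrite hornerM hornerC horner_prod; congr (_ * _); apply: eq_bigr => i _.
  by rewrite horner_exp.
have qn0 : qp != 0.
  by apply: contra p0c0 => /eqP q0; rewrite -(cs1 c0) -qpE q0 horner0.
have Hs : forall s, qp.[s] != 0 -> exists v : 'cV_(size Cols),
    v != 0 /\ map_mx (horner_eval s) (Mp c0 K Cols) *m v = 0.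
  move=> s qs.
  have Us : U (cs c0 s) by apply/(HU _).2; exists p0; rewrite -qpE.
  have [Gs [Gsn0 [HGs NGs]]] := HG _ Us.
  have sub : {subset msupp Gs <= Cols}.
    move=> m mG; apply/memCols/NGs; rewrite /newton; apply: conv_in_conv.
    by apply: conv_pt; rewrite exponentsE map_f.
  exists (vec Cols Gs); split; first exact: vec_neq0.
  apply/(key_iff c0 Cols_uniq HK) => //; apply/(HGs Gs).2; exists 1; by rewrite mul1r.
have [v [vn0 Mv]] := kernel_specialize 0 qn0 Hs.
pose Gst := @polyOf _ Cols v.
have sub := @polyOf_supp _ Cols v.
have : lzero (lsubst Gst (generic_family (cs c0 0))).
  by apply/(key_iff c0 Cols_uniq HK) => //; rewrite vec_polyOf.
rewrite cs0 GF_cf => /(Hg _).1 [q Eq].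
have Gn0 := polyOf_neq0 Cols_uniq vn0.
have qn0' : q != 0 by apply: contra Gn0 => /eqP q0; rewrite -/Gst Eq q0 mul0r.
have [b0 b0q] : exists b0, b0 \in msupp q.
  case E: (msupp q) => [|m l]; last by exists m; rewrite inE eqxx.
  by move/eqP: E; rewrite msupp_eq0 (negPf qn0').
exists (expo b0) => x /(newton_prod b0q) Hx.
rewrite mulrC -Eq in Hx.
apply/NG0; rewrite /newton; apply: conv_in_conv; apply: conv_trans Hx => y.
rewrite exponentsE => /mapP [m mG ->].
by have /memCols /NG0 /in_conv_conv := sub m mG.
Qed.
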